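(* Let $\lambda=(\lambda^{(1)},\lambda^{(2)})$ with $\lambda^{(1)},\lambda^{(2)}\in\mathbb R^{\mathcal U_g}_{\ge0}$ and $\mu=(\mu^{(1)}_k,\mu^{(2)}_k)_{k\in[N]}$ with $\mu^{(1)}_k,\mu^{(2)}_k\in\mathbb R^{\mathcal U_{l,k}}_{\ge0}$ be non-negative. Then an optimal solution $\mathbf h^*=(h_1^*,\dots,h_N^* )$ of the inner problem $\min_{\mathbf h\in\mathcal H^N}\mathcal L(\mathbf h,\lambda,\mu)$ is realized by local deterministic classifiers $h^*_k$, $k\in[N]$, satisfying $$h^*_k(x)=e_y,\qquad y\in\arg\max_{j\in[m]}\Big(\sum_{a\in\mathcal A}\mathbb P(A=a\mid X=x,K=k)\,\big[\mathbf M^{\lambda,\mu}(a,k)\big]^\top\eta(x,a,k)\Big)_j,$$ where $$\mathbf M^{\lambda,\mu}(a,k)=\mathbf I-\frac{1}{p_{a,k}}\Big[\sum_{u\in\mathcal U_g}(\lambda^{(1)}_u-\lambda^{(2)}_u)\mathbf D^{a,k}_u+\sum_{u\in\mathcal U_{l,k}}(\mu^{(1)}_{k,u}-\mu^{(2)}_{k,u})\mathbf D^{a,k}_u\Big].$$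
   Context: Let $(X,A,Y,K)$ be a random tuple with $X\in\mathcal X\subseteq\mathbb R^d$, sensitive attribute $A$ in a finite set $\mathcal A$, label $Y\in[m]$ and client index $K\in[N]$; $p_{a,k}=\mathbb P(A=a,K=k)>0$. The Bayes score is $\eta(x,a,k)\in\Delta_m$ with $\eta_y(x,a,k)=\mathbb P(Y=y\mid X=x,A=a,K=k)$, where $\Delta_m$ is the probability simplex in $\mathbb R^m$ and $e_y$ the $y$-th standard basis vector. $\mathcal H=\{h:\mathcal X\to\Delta_m\}$ is the set of (measurable, randomized, attribute-blind) classifiers: given $X=x$, the prediction $\widehat Y$ satisfies $\mathbb P(\widehat Y=j\mid X=x)=h_j(x)$; $h$ is deterministic if its values lie in $\{e_1,\dots,e_m\}$. A federated classifier is $\mathbf h=(h_1,\dots,h_N)\in\mathcal H^N$, client $k$ using $h_k$. Confusion matrices: $\mathbf C^{a,k}_{i,j}(h_k)=\mathbb P(Y=i,\widehat Y=j\mid A=a,K=k)$. $\langle\mathbf A,\mathbf B\rangle=\sum_{i,j}a_{ij}b_{ij}$; $\mathbf 1_{m\times m}$ is the all-ones matrix, $\mathbf I$ the identity. Risk: $\mathcal R(\mathbf h)=\sum_{a,k}p_{a,k}\langle\mathbf 1_{m\times m}-\mathbf I,\mathbf C^{a,k}(h_k)\rangle$. Given finite index sets $\mathcal U_g$, $\mathcal U_{l,k}$ and fixed real $m\times m$ matrices $\mathbf D^{a,k}_u$: $\mathscr D^g_u(\mathbf h)=\sum_{a}\sum_{k}\langle\mathbf D^{a,k}_u,\mathbf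 C^{a,k}(h_k)\rangle$ ($u\in\mathcal U_g$) and $\mathscr D^{l,k}_u(\mathbf h)=\sum_a\langle\mathbf D^{a,k}_u,\mathbf C^{a,k}(h_k)\rangle$ ($u\in\mathcal U_{l,k}$). For constants $\xi^g,\xi^{l,k}>0$, the Lagrangian of the fair problem (minimize $\mathcal R$ subject to $|\mathscr D^g_u|\le\xi^g$ and $|\mathscr D^{l,k}_u|\le\xi^{l,k}$) is $$\mathcal L(\mathbf h,\lambda,\mu)=\mathcal R(\mathbf h)+\sum_{u\in\mathcal U_g}\big[(\lambda^{(1)}_u-\lambda^{(2)}_u)\mathscr D^g_u(\mathbf h)-(\lambda^{(1)}_u+\lambda^{(2)}_u)\xi^g\big]+\sum_{k\in[N]}\sum_{u\in\mathcal U_{l,k}}\big[(\mu^{(1)}_{k,u}-\mu^{(2)}_{k,u})\mathscr D^{l,k}_u(\mathbf h)-(\mu^{(1)}_{k,u}+\mu^{(2)}_{k,u})\xi^{l,k}\big].$$ *)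

(* Defs.v *)
From HB Require Import structures.
From mathcomp Require Import all_boot all_order all_algebra.
From mathcomp Require Import all_classical all_reals all_analysis.
Set Implicit Arguments. Unset Strict Implicit. Unset Printing Implicit Defensive.
Import Order.TTheory GRing.Theory Num.Theory.
Local Open Scope classical_set_scope.
Local Open Scope ring_scope.

Section FedFair.
Context {R : realType} {d : measure_display} {Omega : measurableType d}
  (P : probability Omega R) {dX : measure_display} {T : measurableType dX}
  {Atype : finType} {m N : nat}
  (X : Omega -> T) (A : Omega -> Atype) (Y : Omega -> 'I_m) (K : Omega -> 'I_N).

Definition pak (a : Atype) (k : 'I_N) : R := fine (P [set w | A w = a /\ K w = k]).

Definition classifier (h : T -> 'I_m -> R) : Prop :=
  (forall j, measurable_fun setT (fun x => h x j)) /\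
  (forall x, (forall j, 0 <= h x j) /\ \sum_j h x j = 1).

Definition deterministic (h : T -> 'I_m -> R) : Prop :=
  forall x, exists y : 'I_m, forall j, h x j = (j == y)%:R.

(* C^{a,k}_{i,j}(h) = P(Y = i, Yhat = j | A = a, K = k), where given X = x
   the prediction Yhat is drawn from h(x) independently of (A, Y, K) *)
Definition confmx (a : Atype) (k : 'I_N) (h : T -> 'I_m -> R) : 'M[R]_m :=
  \matrix_(i, j) ((pak a k)^-1 *
     Rintegral P [set w | A w = a /\ K w = k /\ Y w = i] (fun w => h (X w) j)).

Definition frob (M M' : 'M[R]_m) : R := \sum_i \sum_j M i j * M' i j.

Definition risk (h : 'I_N -> T -> 'I_m -> R) : R :=
  \sum_(a : Atype) \sum_(k < N)
     pak a k * frob (const_mx 1 - 1%:M) (confmx a k (h k)).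

Context (Ug : finType) (Ul : 'I_N -> finType)
  (Dg : Ug -> Atype -> 'I_N -> 'M[R]_m) (Dl : forall k, Ul k -> Atype -> 'M[R]_m).

Definition disp_g (u : Ug) (h : 'I_N -> T -> 'I_m -> R) : R :=
  \sum_(a : Atype) \sum_(k < N) frob (Dg u a k) (confmx a k (h k)).

Definition disp_l (k : 'I_N) (u : Ul k) (h : 'I_N -> T -> 'I_m -> R) : R :=
  \sum_(a : Atype) frob (Dl u a) (confmx a k (h k)).

Definition lagrangian (xig : R) (xil : 'I_N -> R)
  (lam1 lam2 : Ug -> R) (mu1 mu2 : forall k, Ul k -> R)
  (h : 'I_N -> T -> 'I_m -> R) : R :=
  risk h
  + \sum_(u : Ug) ((lam1 u - lam2 u) * disp_g u h - (lam1 u + lam2 u) * xig)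
  + \sum_(k < N) \sum_(u : Ul k)
       ((mu1 k u - mu2 k u) * disp_l u h - (mu1 k u + mu2 k u) * xil k).

Definition Mlm (lam1 lam2 : Ug -> R) (mu1 mu2 : forall k, Ul k -> R)
  (a : Atype) (k : 'I_N) : 'M[R]_m :=
  1%:M - (pak a k)^-1 *:
    (\sum_(u : Ug) (lam1 u - lam2 u) *: Dg u a k
     + \sum_(u : Ul k) (mu1 k u - mu2 k u) *: Dl u a).

(* the score vector  sum_a P(A=a | X=x, K=k) [M(a,k)]^T eta(x,a,k),
   with q a x k a version of P(A = a | X = x, K = k) *)
Definition score (lam1 lam2 : Ug -> R) (mu1 mu2 : forall k, Ul k -> R)
  (eta : T -> Atype -> 'I_N -> 'I_m -> R) (q : Atype -> T -> 'I_N -> R)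
  (k : 'I_N) (x : T) (j : 'I_m) : R :=
  \sum_(a : Atype) q a x k *
     (((Mlm lam1 lam2 mu1 mu2 a k)^T *m (\col_i eta x a k i)) j ord0).

Definition bayes_rule (lam1 lam2 : Ug -> R) (mu1 mu2 : forall k, Ul k -> R)
  (eta : T -> Atype -> 'I_N -> 'I_m -> R) (q : Atype -> T -> 'I_N -> R)
  (hs : 'I_N -> T -> 'I_m -> R) : Prop :=
  forall k, classifier (hs k) /\ deterministic (hs k) /\
    forall x, exists y : 'I_m, (forall j, hs k x j = (j == y)%:R) /\
      forall j, score lam1 lam2 mu1 mu2 eta q k x j
                <= score lam1 lam2 mu1 mu2 eta q k x y.

End FedFair.

(* Main.v *)
Require Import Defs.
From HB Require Import structures.
From mathcomp Require Import all_boot all_order all_algebra.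
From mathcomp Require Import all_classical all_reals all_analysis.
From mathcomp Require Import measurable_realfun ring lra.
Import Order.TTheory GRing.Theory Num.Theory.
Local Open Scope classical_set_scope.
Local Open Scope ring_scope.

Set Implicit Arguments. Unset Strict Implicit. Unset Printing Implicit Defensive.
Section Dens.
Context {R : realType} {d : measure_display} {Omega : measurableType d}
  (P : probability Omega R) {dX : measure_display} {T : measurableType dX}
  (X : Omega -> T) (mX : measurable_fun setT X)
  (S S' : set Omega) (mS : measurable S) (mS' : measurable S')
  (phi : T -> R) (mphi : measurable_fun setT phi) (phi0 : forall x, 0 <= phi x)
  (H : forall B, measurable B -> P [set w | B (X w) /\ S w] =
     (\int[P]_(w in [set w | B (X w) /\ S' w]) (phi (X w))%:E)%E).

Local Open Scope ereal_scope.
Import HBNNSimple.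

Lemma dens_indic (B : set T) (r : R) : measurable B -> (0 <= r)%R ->
  \int[P]_(w in S) (r * \1_B (X w))%:E =
  \int[P]_(w in S') ((r * \1_B (X w))%:E * (phi (X w))%:E).
Proof.
move=> mB r0.
have mXB : measurable (X @^-1` B).
  by rewrite -[X @^-1` B]setTI; exact: mX.
have ind : forall w, \1_B (X w) = \1_(X @^-1` B) w :> R.
  by move=> w; rewrite !indicE.
under eq_integral do rewrite EFinM.
rewrite ge0_integralZl_EFin//; last first.
  by apply/measurable_EFinP; apply: measurableT_comp => //; exact: measurable_funTS.
under eq_integral do rewrite ind.
rewrite integral_indic//.
transitivity (r%:E * \int[P]_(w in S' `&` X @^-1` B) (phi (X w))%:E); last first.
  rewrite integral_mkcondr -ge0_integralZl_EFin//.
  - apply: eq_integral => w _; rewrite /patch ind indicE.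
    case: ifP => _; first by rewrite mulr1.
    by rewrite mulr0 mul0e; apply: mule0.
  - by move=> w _; rewrite /patch; case: ifP => _; [rewrite lee_fin|apply: lexx].
  - apply/measurable_restrict => //.
    by apply/measurable_EFinP; apply: measurableT_comp => //; exact: measurable_funTS.
congr (_ * _); transitivity (P [set w | B (X w) /\ S w]); first by [].
by rewrite H// setIC.
Qed.

Lemma dens_nnsfun (h : {nnsfun T >-> R}) :
  \int[P]_(w in S) (h (X w))%:E =
  \int[P]_(w in S') ((h (X w))%:E * (phi (X w))%:E).
Proof.
have mh r : measurable (h @^-1` [set r]).
  by rewrite -[h @^-1` _]setTI; apply: measurable_funP => //.
have ge r z : (0 <= r * \1_(h @^-1` [set r]) z)%R.
  by have := nnfun_muleindic_ge0 h r z; rewrite -EFinM lee_fin.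
have fr : finite_set (range h) by exact: fimfunP.
have mind r : measurable_fun setT (fun w => (r * \1_(h @^-1` [set r]) (X w))%:E).
  apply/measurable_EFinP; apply: measurable_funM => //.
  by apply: measurableT_comp => //; exact: measurable_indic.
transitivity (\int[P]_(w in S) (\sum_(r \in range h) (r * \1_(h @^-1` [set r]) (X w))%:E)).
  by apply: eq_integral => w _; rewrite fsumEFin// -fimfunE.
transitivity (\int[P]_(w in S') (\sum_(r \in range h) (r * \1_(h @^-1` [set r]) (X w))%:E * (phi (X w))%:E)); last first.
  apply: eq_integral => w _; rewrite -ge0_mule_fsuml; last first.
    by move=> r; rewrite lee_fin ge.
  by rewrite fsumEFin// -fimfunE.
rewrite !ge0_integral_fsum//.
- apply: eq_fsbigr => r /= rh; apply: dens_indic => //.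
  by move: rh; rewrite inE => -[x _ <-]; exact: fun_ge0.
- move=> r; apply: emeasurable_funM; first exact: measurable_funTS.
  by apply/measurable_EFinP; apply: measurableT_comp => //; exact: measurable_funTS.
- by move=> r w _; rewrite mule_ge0// lee_fin// ge.
- by move=> r; exact: measurable_funTS.
- by move=> r w _; rewrite lee_fin ge.
Qed.

Lemma dens_ge0 (g : T -> R) : measurable_fun setT g -> (forall x, 0 <= g x)%R ->
  \int[P]_(w in S) (g (X w))%:E =
  \int[P]_(w in S') ((g (X w))%:E * (phi (X w))%:E).
Proof.
move=> mg0 g0.
have mg : measurable_fun setT (EFin \o g) by exact/measurable_EFinP.
pose h := nnsfun_approx measurableT mg.
have cv x : (g x)%:E = limn (fun n => (h n x)%:E).
  apply/esym/cvg_lim => //; apply: (cvg_nnsfun_approx measurableT mg) => //.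
  by move=> y _; rewrite lee_fin.
have mhX n : measurable_fun setT (fun w => (h n (X w))%:E).
  by apply/measurable_EFinP; apply: measurableT_comp.
transitivity (\int[P]_(w in S) limn (fun n => (h n (X w))%:E)).
  by apply: eq_integral => w _; rewrite cv.
transitivity (\int[P]_(w in S') limn (fun n => (h n (X w))%:E * (phi (X w))%:E)); last first.
  apply: eq_integral => w _; apply: cvg_lim => //.
  apply: cvgeZr => //; apply: (cvg_nnsfun_approx measurableT mg) => //.
  by move=> y _; rewrite lee_fin.
rewrite monotone_convergence//; last 3 first.
- by move=> n; exact: measurable_funTS.
- by move=> n w _; rewrite lee_fin.
- by move=> w _ a b ab; rewrite lee_fin; exact/lefP/nd_nnsfun_approx.
rewrite monotone_convergence//; last 3 first.
- move=> n; apply: emeasurable_funM; first exact: measurable_funTS.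
  by apply/measurable_EFinP; apply: measurableT_comp => //; exact: measurable_funTS.
- by move=> n w _; rewrite mule_ge0// lee_fin.
- move=> w _ a b ab; rewrite lee_wpmul2r ?lee_fin//.
  exact/lefP/nd_nnsfun_approx.
by under eq_fun do rewrite dens_nnsfun.
Qed.
End Dens.

Section Bnd.
Context {R : realType} {d : measure_display} {Omega : measurableType d}
  (P : probability Omega R).

Definition bnd (f : Omega -> R) :=
  measurable_fun setT f /\ exists c : R, forall x, `|f x| <= c.

Lemma bnd_int (f : Omega -> R) D : measurable D -> bnd f ->
  P.-integrable D (EFin \o f).
Proof.
move=> mD [mf [c hc]]; apply: measurable_bounded_integrable => //.
- by apply: (le_lt_trans (probability_le1 P mD)); exact: ltey.
- exact: measurable_funTS.
- rewrite /bounded_near; near=> M => t At /=.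
  apply: le_trans (hc t) _; near: M; exact: (nbhs_pinfty_ge (num_real c)).
Unshelve. all: end_near. Qed.

Lemma bndD f g : bnd f -> bnd g -> bnd (fun x => f x + g x).
Proof.
move=> [mf [c hc]] [mg [e he]]; split; first exact: measurable_funD.
by exists (c + e) => x; apply: le_trans (ler_normD _ _) _; apply: lerD.
Qed.

Lemma bndM f g : bnd f -> bnd g -> bnd (fun x => f x * g x).
Proof.
move=> [mf [c hc]] [mg [e he]]; split; first exact: measurable_funM.
exists (c * e) => x; rewrite normrM; apply: ler_pM => //.
Qed.

Lemma bndC (c : R) : bnd (fun _ => c).
Proof. by split => //; exists `|c|. Qed.


Lemma bnd_sum (I : finType) (F : I -> Omega -> R) :
  (forall i, bnd (F i)) -> bnd (fun x => \sum_i F i x).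
Proof.
move=> hF.
have -> : (fun x => \sum_i F i x) = \sum_i F i.
  by apply/funext => x; rewrite fct_sumE.
apply: (big_ind bnd) => //.
- have -> : (0 : Omega -> R) = fun _ => 0 by [].
  exact: bndC.
- move=> f g hf hg; exact: bndD.
Qed.

Lemma Rint_sum (I : finType) (F : I -> Omega -> R) D : measurable D ->
  (forall i, bnd (F i)) ->
  Rintegral P D (fun x => \sum_i F i x) = \sum_i Rintegral P D (F i).
Proof.
move=> mD hF.
rewrite /Rintegral.
under eq_integral do rewrite -sumEFin.
rewrite integral_sum//; last by move=> i; exact: bnd_int.
rewrite -sum_fine//.
by move=> i _; apply: integrable_fin_num => //; exact: bnd_int.
Qed.

Lemma RintZ (c : R) f D : measurable D -> bnd f ->
  Rintegral P D (fun x => c * f x) = c * Rintegral P D f.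
Proof. by move=> mD hf; apply: RintegralZl => //; exact: bnd_int. Qed.

End Bnd.

Section Main.
Variables (R : realType) (d : measure_display) (Omega : measurableType d)
  (P : probability Omega R) (dX : measure_display) (T : measurableType dX)
  (Atype : finType) (m N : nat)
  (X : Omega -> T) (A : Omega -> Atype) (Y : Omega -> 'I_m) (K : Omega -> 'I_N)
  (eta : T -> Atype -> 'I_N -> 'I_m -> R) (q : Atype -> T -> 'I_N -> R)
  (Ug : finType) (Ul : 'I_N -> finType)
  (Dg : Ug -> Atype -> 'I_N -> 'M[R]_m) (Dl : forall k, Ul k -> Atype -> 'M[R]_m)
  (xig : R) (xil : 'I_N -> R)
  (lam1 lam2 : Ug -> R) (mu1 mu2 : forall k, Ul k -> R).
Hypotheses (mX : measurable_fun setT X)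
  (mA : forall a, measurable [set w | A w = a])
  (mY : forall y, measurable [set w | Y w = y])
  (mK : forall k, measurable [set w | K w = k])
  (pak0 : forall a k, 0 < pak P A K a k)
  (meta : forall a k i, measurable_fun setT (fun x => eta x a k i))
  (eta_s : forall x a k, (forall i, 0 <= eta x a k i) /\ \sum_i eta x a k i = 1)
  (etaH : forall a k i (B : set T), measurable B ->
     P [set w | B (X w) /\ A w = a /\ K w = k /\ Y w = i] =
     (\int[P]_(w in [set w | B (X w) /\ A w = a /\ K w = k]) (eta (X w) a k i)%:E)%E)
  (mq : forall a k, measurable_fun setT (fun x => q a x k))
  (q_s : forall x k, (forall a, 0 <= q a x k) /\ \sum_a q a x k = 1)
  (qH : forall a k (B : set T), measurable B ->
     P [set w | B (X w) /\ A w = a /\ K w = k] =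
     (\int[P]_(w in [set w | B (X w) /\ K w = k]) (q a (X w) k)%:E)%E).

Lemma simplex_le1 (I : finType) (f : I -> R) i :
  (forall j, 0 <= f j) -> \sum_j f j = 1 -> f i <= 1.
Proof.
move=> f0 f1; rewrite -f1 (bigD1 i)//= lerDl sumr_ge0//.
Qed.

Lemma mSak a k : measurable [set w | A w = a /\ K w = k].
Proof. exact: (measurableI _ _ (mA a) (mK k)). Qed.

Lemma mSaki a k i : measurable [set w | A w = a /\ K w = k /\ Y w = i].
Proof. exact: (measurableI _ _ (mA a) (measurableI _ _ (mK k) (mY i))). Qed.

Lemma eta_b x a k i : 0 <= eta x a k i <= 1.
Proof.
have [h1 h2] := eta_s x a k; rewrite h1; exact: simplex_le1.
Qed.

Lemma q_b x a k : 0 <= q a x k <= 1.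
Proof.
have [h1 h2] := q_s x k; rewrite h1 /=; exact: (simplex_le1 (f := fun a => q a x k)).
Qed.

Lemma h_b (h : T -> 'I_m -> R) x j : classifier h -> 0 <= h x j <= 1.
Proof.
move=> [_ hs]; have [h1 h2] := hs x; rewrite h1; exact: simplex_le1.
Qed.

Lemma I_eq (h : T -> 'I_m -> R) a k i j : classifier h ->
  Rintegral P [set w | A w = a /\ K w = k /\ Y w = i] (fun w => h (X w) j) =
  Rintegral P [set w | K w = k]
    (fun w => h (X w) j * eta (X w) a k i * q a (X w) k).
Proof.
move=> hc; have [mh _] := hc; rewrite /Rintegral; congr fine.
have e0 x : 0 <= eta x a k i by have /andP[] := eta_b x a k i.
have h0 x : 0 <= h x j by have /andP[] := h_b x j hc.
have q0 x : 0 <= q a x k by have /andP[] := q_b x a k.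
rewrite (dens_ge0 (g := fun x => h x j) mX (mSaki a k i) (mSak a k) (meta a k i) e0 _ (mh j) h0); last first.
  by move=> B mB; exact: etaH.
rewrite [LHS](eq_integral (fun w => (h (X w) j * eta (X w) a k i)%:E)); last by move=> w _; rewrite EFinM.
rewrite (dens_ge0 (g := fun x => h x j * eta x a k i) mX (mSak a k) (mK k) (mq a k) q0 _).
- by apply: eq_integral => w _; rewrite EFinM.
- by move=> B mB; exact: qH.
- by apply: measurable_funM => //; exact: mh.
- by move=> x; rewrite mulr_ge0.
Qed.


Definition Iv (h : 'I_N -> T -> 'I_m -> R) a k i j :=
  Rintegral P [set w | A w = a /\ K w = k /\ Y w = i] (fun w => h k (X w) j).
Definition Mc a k := Mlm P A K Dg Dl lam1 lam2 mu1 mu2 a k.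
Definition Xi := \sum_u (lam1 u + lam2 u) * xig
  + \sum_k \sum_(u : Ul k) (@mu1 k u + @mu2 k u) * xil k.

Lemma sum4_exch (U : finType) (c : U -> R) (F : U -> Atype -> 'I_N -> 'I_m -> 'I_m -> R) :
  \sum_u c u * (\sum_a \sum_k \sum_i \sum_j F u a k i j) =
  \sum_a \sum_k \sum_i \sum_j \sum_u c u * F u a k i j.
Proof.
transitivity (\sum_u \sum_a \sum_k \sum_i \sum_j c u * F u a k i j).
  apply: eq_bigr => u _; rewrite mulr_sumr; apply: eq_bigr => a _.
  rewrite mulr_sumr; apply: eq_bigr => k _; rewrite mulr_sumr; apply: eq_bigr => i _.
  by rewrite mulr_sumr.
rewrite exchange_big; apply: eq_bigr => a _; rewrite exchange_big.
apply: eq_bigr => k _; rewrite exchange_big; apply: eq_bigr => i _.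
by rewrite exchange_big.
Qed.

Lemma sum3_exch (U : finType) (c : U -> R) (F : U -> Atype -> 'I_m -> 'I_m -> R) :
  \sum_u c u * (\sum_a \sum_i \sum_j F u a i j) =
  \sum_a \sum_i \sum_j \sum_u c u * F u a i j.
Proof.
transitivity (\sum_u \sum_a \sum_i \sum_j c u * F u a i j).
  apply: eq_bigr => u _; rewrite mulr_sumr; apply: eq_bigr => a _.
  rewrite mulr_sumr; apply: eq_bigr => i _; by rewrite mulr_sumr.
rewrite exchange_big; apply: eq_bigr => a _; rewrite exchange_big.
apply: eq_bigr => i _; by rewrite exchange_big.
Qed.

Lemma lagr_step1 h : lagrangian P X A Y K Dg Dl xig xil lam1 lam2 mu1 mu2 h =
  \sum_a \sum_k \sum_i \sum_j (1 - Mc a k i j) * Iv h a k i j - Xi.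
Proof.
rewrite /lagrangian /Xi sumrB.
under [X in _ + _ + X]eq_bigr do rewrite sumrB.
rewrite sumrB.
suff -> : \sum_a \sum_k \sum_i \sum_j (1 - Mc a k i j) * Iv h a k i j =
  risk P X A Y K h + \sum_u (lam1 u - lam2 u) * disp_g P X A Y K Dg u h
  + \sum_k \sum_(u : Ul k) (@mu1 k u - @mu2 k u) * disp_l P X A Y K Dl u h.
  by rewrite !opprD !addrA; congr (_ + _); rewrite addrAC -!addrA; congr (_ + _);
     rewrite addrC -addrA; congr (_ + _); rewrite addrC.
rewrite /disp_g /disp_l /frob sum4_exch.
under [X in _ = _ + _ + X]eq_bigr do rewrite sum3_exch.
rewrite [X in _ = _ + _ + X]exchange_big /risk /frob.
rewrite -!big_split; apply: eq_bigr => a _.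
rewrite -!big_split; apply: eq_bigr => k _.
rewrite mulr_sumr -!big_split; apply: eq_bigr => i _.
rewrite mulr_sumr -!big_split; apply: eq_bigr => j _ /=.
rewrite /Mc /Mlm /Iv !mxE !summxE.
have pn : pak P A K a k != 0 by rewrite gt_eqF.
set p := pak P A K a k.
set I := Rintegral _ _ _.
under [X in _ * (X + _)]eq_bigr do rewrite mxE.
under [X in (_ - (_ - _ * (_ + X))) * _ = _]eq_bigr do rewrite mxE.
under [X in _ = _ + X + _]eq_bigr do rewrite mulrA.
under [X in _ = _ + _ + X]eq_bigr do rewrite mulrA.
rewrite -!mulr_suml.
by field.
Qed.


Lemma bnd_comp01 (g : T -> R) : measurable_fun setT g -> (forall x, 0 <= g x <= 1) ->
  bnd (fun w => g (X w)).
Proof.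
move=> mg g01; split; first exact: measurableT_comp.
exists 1 => w; have /andP[g0 g1] := g01 (X w); by rewrite ger0_norm.
Qed.

Definition cc k x j := \sum_a q a x k * \sum_i (1 - Mc a k i j) * eta x a k i.

Lemma bnd_f (h : T -> 'I_m -> R) a k i j : classifier h ->
  bnd (fun w => h (X w) j * eta (X w) a k i * q a (X w) k).
Proof.
move=> hc; have [mh _] := hc.
apply: bndM; last by apply: (bnd_comp01 (g := fun x => q a x k)) => // x; exact: q_b.
apply: bndM; first by apply: (bnd_comp01 (g := fun x => h x j)) => // x; exact: h_b.
by apply: (bnd_comp01 (g := fun x => eta x a k i)) => // x; exact: eta_b.
Qed.

Lemma lagr_step2 h : (forall k, classifier (h k)) ->
  \sum_a \sum_k \sum_i \sum_j (1 - Mc a k i j) * Iv h a k i j =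
  \sum_k Rintegral P [set w | K w = k] (fun w => \sum_j h k (X w) j * cc k (X w) j).
Proof.
move=> hc; rewrite exchange_big; apply: eq_bigr => k _.
rewrite /Iv.
transitivity (\sum_a \sum_i \sum_j (1 - Mc a k i j) *
  Rintegral P [set w | K w = k] (fun w => h k (X w) j * eta (X w) a k i * q a (X w) k)).
  apply: eq_bigr => a _; apply: eq_bigr => i _; apply: eq_bigr => j _.
  by rewrite I_eq.
rewrite (@eq_Rintegral _ _ _ P _ (fun w => \sum_a \sum_i \sum_j (1 - Mc a k i j) *
   (h k (X w) j * eta (X w) a k i * q a (X w) k)) _); last first.
  move=> w _ /=.
  under eq_bigr do rewrite /cc mulr_sumr.
  rewrite exchange_big; apply: eq_bigr => a _.
  rewrite [RHS]exchange_big; apply: eq_bigr => j _; rewrite mulrA mulr_sumr.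
  apply: eq_bigr => i _.
  by rewrite /=; ring.
rewrite Rint_sum//; last first.
  move=> a; apply: bnd_sum => i; apply: bnd_sum => j.
  by apply: bndM; [exact: bndC|exact: bnd_f].
apply: eq_bigr => a _; rewrite Rint_sum//; last first.
  move=> i; apply: bnd_sum => j.
  by apply: bndM; [exact: bndC|exact: bnd_f].
apply: eq_bigr => i _; rewrite Rint_sum//; last first.
  by move=> j; apply: bndM; [exact: bndC|exact: bnd_f].
apply: eq_bigr => j _; rewrite RintZ//; exact: bnd_f.
Qed.


Lemma lagr_eq h : (forall k, classifier (h k)) ->
  lagrangian P X A Y K Dg Dl xig xil lam1 lam2 mu1 mu2 h =
  \sum_k Rintegral P [set w | K w = k] (fun w => \sum_j h k (X w) j * cc k (X w) j) - Xi.
Proof. by move=> hc; rewrite lagr_step1 lagr_step2. Qed.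

Lemma cc_score k x j : cc k x j =
  \sum_a q a x k * \sum_i eta x a k i - score P A K Dg Dl lam1 lam2 mu1 mu2 eta q k x j.
Proof.
rewrite /cc /score -sumrB; apply: eq_bigr => a _.
rewrite -mulrBr; congr (_ * _).
rewrite !mxE -sumrB; apply: eq_bigr => i _; rewrite !mxE /Mc.
by rewrite mulrBl mul1r.
Qed.

Lemma simplex_min (v c : 'I_m -> R) y : (forall j, 0 <= v j) -> \sum_j v j = 1 ->
  (forall j, c y <= c j) -> c y <= \sum_j v j * c j.
Proof.
move=> v0 v1 cy.
have -> : c y = \sum_j v j * c y by rewrite -mulr_suml v1 mul1r.
by apply: ler_sum => j _; apply: ler_wpM2l.
Qed.

Lemma sum_delta (c : 'I_m -> R) y : \sum_j (j == y)%:R * c j = c y.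
Proof.
rewrite (bigD1 y)//= eqxx mul1r big1 ?addr0// => j /negbTE ->; by rewrite mul0r.
Qed.

Lemma bnd_cc k j : bnd (fun w => cc k (X w) j).
Proof.
rewrite /cc; apply: bnd_sum => a; apply: bndM.
  by apply: (bnd_comp01 (g := fun x => q a x k)) => // x; exact: q_b.
apply: bnd_sum => i; apply: bndM; first exact: bndC.
by apply: (bnd_comp01 (g := fun x => eta x a k i)) => // x; exact: eta_b.
Qed.

Lemma bnd_hc (h : T -> 'I_m -> R) k : classifier h ->
  bnd (fun w => \sum_j h (X w) j * cc k (X w) j).
Proof.
move=> hc; have [mh _] := hc; apply: bnd_sum => j; apply: bndM; last exact: bnd_cc.
by apply: (bnd_comp01 (g := fun x => h x j)) => // x; exact: h_b.
Qed.

Lemma lagr_le hs h : bayes_rule P A K Dg Dl lam1 lam2 mu1 mu2 eta q hs ->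
  (forall k, classifier (h k)) ->
  lagrangian P X A Y K Dg Dl xig xil lam1 lam2 mu1 mu2 hs
  <= lagrangian P X A Y K Dg Dl xig xil lam1 lam2 mu1 mu2 h.
Proof.
move=> hb hc.
have hsc k : classifier (hs k) by have [] := hb k.
rewrite !lagr_eq// lerD2r; apply: ler_sum => k _.
apply: le_Rintegral => //.
- by apply: bnd_int => //; exact: bnd_hc.
- by apply: bnd_int => //; exact: bnd_hc.
move=> w _; have [_ [_ hy]] := hb k.
have [y [hsy ymax]] := hy (X w).
under eq_bigr do rewrite hsy.
rewrite sum_delta; have [_ hcs] := hc k; have [h0 h1] := hcs (X w).
apply: simplex_min => // j.
by rewrite !cc_score lerD2l lerN2.
Qed.


Lemma first_max (s : 'I_m -> R) (y0 : 'I_m) :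
  exists y, [forall i, (s i <= s y) && ((i < y)%N ==> (s i < s y))].
Proof.
have [j0 _ Hj0] : exists2 j0, True & forall i, s i <= s j0.
  case: (@arg_maxP _ _ _ y0 xpredT s) => // j0 _ H; exists j0 => // i; exact: H.
case: (@arg_minP _ _ _ j0 (fun j => s j == s j0) (fun j : 'I_m => nat_of_ord j)) => //.
move=> y /eqP syj Hmin; exists y; apply/forallP => i; rewrite syj Hj0 /=.
apply/implyP => iy; rewrite lt_neqAle Hj0 andbT; apply/negP => /eqP sij.
by have := Hmin i (introT eqP sij); rewrite leEnat leqNgt iy.
Qed.

Lemma first_max_uniq (s : 'I_m -> R) y1 y2 :
  [forall i, (s i <= s y1) && ((i < y1)%N ==> (s i < s y1))] ->
  [forall i, (s i <= s y2) && ((i < y2)%N ==> (s i < s y2))] -> y1 = y2.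
Proof.
move=> /forallP H1 /forallP H2; apply: val_inj => /=.
case: (ltngtP y1 y2) => // lt12.
- have /andP[_ /implyP/(_ lt12)] := H2 y1.
  by have /andP[+ _] := H1 y2; rewrite leNgt => /negbTE ->.
- have /andP[_ /implyP/(_ lt12)] := H1 y2.
  by have /andP[+ _] := H2 y1; rewrite leNgt => /negbTE ->.
Qed.

Lemma meas_le_ind (f g : T -> R) : measurable_fun setT f -> measurable_fun setT g ->
  measurable_fun setT (fun x => ((f x <= g x)%R)%:R : R).
Proof.
move=> mf mg.
have mU : measurable [set x | f x <= g x].
  by have := measurable_fun_le measurableT mf mg; rewrite setTI.
rewrite (_ : (fun x => _) = \1_[set x | f x <= g x]); first exact: measurable_indic.
apply/funext => x; rewrite indicE.
by case: (boolP (f x <= g x)) => hx; [rewrite mem_set|rewrite memNset //; apply/negP].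
Qed.

Lemma meas_lt_ind (f g : T -> R) : measurable_fun setT f -> measurable_fun setT g ->
  measurable_fun setT (fun x => ((f x < g x)%R)%:R : R).
Proof.
move=> mf mg.
rewrite (_ : (fun x => _) = fun x => 1 - ((g x <= f x)%R)%:R).
  by apply: measurable_funB => //; exact: meas_le_ind.
by apply/funext => x; rewrite ltNge; case: (g x <= f x); rewrite ?subrr ?subr0.
Qed.

Lemma meas_score k j :
  measurable_fun setT (fun x => score P A K Dg Dl lam1 lam2 mu1 mu2 eta q k x j).
Proof.
rewrite /score; apply: measurable_sum => a; apply: measurable_funM => //.
rewrite (_ : (fun x => _) = fun x => \sum_i Mc a k i j * eta x a k i).
  by apply: measurable_sum => i; apply: measurable_funM.
apply/funext => x; rewrite !mxE; apply: eq_bigr => i _; by rewrite !mxE.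
Qed.

Lemma prod_bool (I : finType) (b : I -> bool) : \prod_i (b i)%:R = ([forall i, b i])%:R :> R.
Proof.
case: (boolP [forall i, b i]) => [/forallP H | /forallPn [i Hi]].
  by rewrite big1 // => i _; rewrite H.
by rewrite (bigD1 i)//= (negbTE Hi) mul0r.
Qed.


Definition Qb k x j := [forall i,
  (score P A K Dg Dl lam1 lam2 mu1 mu2 eta q k x i <= score P A K Dg Dl lam1 lam2 mu1 mu2 eta q k x j)
  && ((i < j)%N ==> (score P A K Dg Dl lam1 lam2 mu1 mu2 eta q k x i < score P A K Dg Dl lam1 lam2 mu1 mu2 eta q k x j))].

Lemma Qb_ex (y0 : 'I_m) k x : exists y, (forall j, Qb k x j = (j == y)) /\
  forall j, score P A K Dg Dl lam1 lam2 mu1 mu2 eta q k x j <= score P A K Dg Dl lam1 lam2 mu1 mu2 eta q k x y.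
Proof.
have [y Hy] := first_max (score P A K Dg Dl lam1 lam2 mu1 mu2 eta q k x) y0.
exists y; split.
  move=> j; apply/idP/eqP => [Hj|->//]; exact: (first_max_uniq Hj Hy).
by move=> j; move/forallP: Hy => /(_ j) /andP[].
Qed.

Lemma exists_bayes (y0 : 'I_m) : exists hs, bayes_rule P A K Dg Dl lam1 lam2 mu1 mu2 eta q hs.
Proof.
exists (fun k x j => (Qb k x j)%:R) => k; split; [|split].
- split.
    move=> j; rewrite /Qb.
    under eq_fun do rewrite -prod_bool.
    apply: measurable_prod => i _.
    rewrite (_ : (fun x => _) = fun x =>
      ((score P A K Dg Dl lam1 lam2 mu1 mu2 eta q k x i <= score P A K Dg Dl lam1 lam2 mu1 mu2 eta q k x j)%R)%:R *
      (if (i < j)%N then ((score P A K Dg Dl lam1 lam2 mu1 mu2 eta q k x i < score P A K Dg Dl lam1 lam2 mu1 mu2 eta q k x j)%R)%:R else 1)).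
      apply: measurable_funM; first by apply: meas_le_ind; exact: meas_score.
      by case: (i < j)%N => //; apply: meas_lt_ind; exact: meas_score.
    apply/funext => x; case: (i < j)%N => /=; case: (_ <= _)%R => /=;
      by rewrite ?mul1r ?mul0r ?mulr1.
  move=> x; have [y [Hy _]] := Qb_ex y0 k x; split.
    by move=> j; rewrite ler0n.
  under eq_bigr do rewrite Hy.
  rewrite (bigD1 y)//= eqxx big1 ?addr0// => j /negbTE -> //.
- move=> x; have [y [Hy _]] := Qb_ex y0 k x; exists y => j; by rewrite Hy.
- move=> x; have [y [Hy Hm]] := Qb_ex y0 k x; exists y; split => // j; by rewrite Hy.
Qed.

End Main.

Unset Implicit Arguments.
Local Open Scope ring_scope.

Theorem proposition2 (R : realType) (d : measure_display) (Omega : measurableType d)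
  (P : probability Omega R) (dX : measure_display) (T : measurableType dX)
  (Atype : finType) (m N : nat)
  (X : Omega -> T) (A : Omega -> Atype) (Y : Omega -> 'I_m) (K : Omega -> 'I_N)
  (eta : T -> Atype -> 'I_N -> 'I_m -> R) (q : Atype -> T -> 'I_N -> R)
  (Ug : finType) (Ul : 'I_N -> finType)
  (Dg : Ug -> Atype -> 'I_N -> 'M[R]_m) (Dl : forall k, Ul k -> Atype -> 'M[R]_m)
  (xig : R) (xil : 'I_N -> R)
  (lam1 lam2 : Ug -> R) (mu1 mu2 : forall k, Ul k -> R) :
  (* the random tuple (X, A, Y, K) *)
  measurable_fun setT X ->
  (forall a, measurable [set w | A w = a]) ->
  (forall y, measurable [set w | Y w = y]) ->
  (forall k, measurable [set w | K w = k]) ->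
  (forall a k, 0 < pak P A K a k) ->
  (* eta(x,a,k) is (a version of) the Bayes score P(Y = . | X = x, A = a, K = k) *)
  (forall a k i, measurable_fun setT (fun x => eta x a k i)) ->
  (forall x a k, (forall i, 0 <= eta x a k i) /\ \sum_i eta x a k i = 1) ->
  (forall a k i (B : set T), measurable B ->
     P [set w | B (X w) /\ A w = a /\ K w = k /\ Y w = i] =
     (\int[P]_(w in [set w | B (X w) /\ A w = a /\ K w = k]) (eta (X w) a k i)%:E)%E) ->
  (* q a x k is (a version of) P(A = a | X = x, K = k) *)
  (forall a k, measurable_fun setT (fun x => q a x k)) ->
  (forall x k, (forall a, 0 <= q a x k) /\ \sum_a q a x k = 1) ->
  (forall a k (B : set T), measurable B ->
     P [set w | B (X w) /\ A w = a /\ K w = k] =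
     (\int[P]_(w in [set w | B (X w) /\ K w = k]) (q a (X w) k)%:E)%E) ->
  (* fairness constants and non-negative multipliers *)
  0 < xig -> (forall k, 0 < xil k) ->
  (forall u, 0 <= lam1 u) -> (forall u, 0 <= lam2 u) ->
  (forall k u, 0 <= mu1 k u) -> (forall k u, 0 <= mu2 k u) ->
  (exists hs, bayes_rule P A K Dg Dl lam1 lam2 mu1 mu2 eta q hs) /\
  (forall hs, bayes_rule P A K Dg Dl lam1 lam2 mu1 mu2 eta q hs ->
     forall h : 'I_N -> T -> 'I_m -> R, (forall k, classifier (h k)) ->
       lagrangian P X A Y K Dg Dl xig xil lam1 lam2 mu1 mu2 hs
       <= lagrangian P X A Y K Dg Dl xig xil lam1 lam2 mu1 mu2 h).
Proof.
move=> mX mA mY mK pak0 meta eta_s etaH mq q_s qH _ _ _ _ _ _.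
have [w0 _] : exists w : Omega, True.
  case: (pselect (exists w : Omega, True)) => // nw; exfalso.
  have E : [set: Omega] = set0.
    by apply/seteqP; split => w //= _; apply: nw; exists w.
  have := probability_setT P; rewrite E measure0 => /(congr1 fine) /= /eqP.
  by rewrite eq_sym oner_eq0.
split; first exact: (exists_bayes P A K Dg Dl lam1 lam2 mu1 mu2 meta mq (Y w0)).
move=> hs hb h hc; exact: (lagr_le xig xil mX mA mY mK pak0 meta eta_s etaH mq q_s qH hb hc).
Qed.
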